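(* Let $W(x)=(x^2-1)^2$ and let $u_0\in\mathcal V$ satisfy $(u_0)_i\ne0$ for all $i\in V$. For $\varepsilon>0$, let $u^\varepsilon(t)$ be the solution of $$\dot u_i=-(\Delta u)_i-\frac1\varepsilon d_i^{-r}W'(u_i)\ (t>0),\qquad u(0)=u_0.$$ Then there exists $\varepsilon_0>0$, depending only on the graph, on $r$ and on $u_0$, such that for every $\varepsilon\in(0,\varepsilon_0]$ and every $i\in V$, $\operatorname{sign}(u^\varepsilon_i(t))=\operatorname{sign}((u_0)_i)$ for all $t\ge0$.
   Context: $G=(V,E)$ is a finite undirected weighted graph with vertex set $V=\{1,\dots,n\}$. The weights satisfy $\omega_{ij}=\omega_{ji}\ge0$, with $\omega_{ij}>0$ iff $\{i,j\}\in E$, and $\omega_{ii}=0$. The degrees are $d_i=\sum_j\omega_{ij}>0$. A parameter $r\in[0,1]$ is fixed. $\mathcal V$ is the space of functions $V\to\mathbb R$. The graph Laplacian is $(\Delta u)_i=d_i^{-r}\sum_j\omega_{ij}(u_i-u_j)$. *)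

(* Defs.v *)
From Stdlib Require Import Reals Lra.
Open Scope R_scope.

Fixpoint fsum (n : nat) (f : nat -> R) : R :=
  match n with
  | O => 0
  | S k => fsum k f + f k
  end.

Definition deg (n : nat) (w : nat -> nat -> R) (i : nat) : R :=
  fsum n (fun j => w i j).

Definition weighted_graph (n : nat) (w : nat -> nat -> R) : Prop :=
  (forall i j, (i < n)%nat -> (j < n)%nat -> w i j = w j i) /\
  (forall i j, (i < n)%nat -> (j < n)%nat -> 0 <= w i j) /\
  (forall i, (i < n)%nat -> w i i = 0) /\
  (forall i, (i < n)%nat -> 0 < deg n w i).

Definition laplacian (n : nat) (w : nat -> nat -> R) (r : R)
    (u : nat -> R) (i : nat) : R :=
  Rpower (deg n w i) (- r) * fsum n (fun j => w i j * (u i - u j)).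

Definition W (x : R) : R := (x ^ 2 - 1) ^ 2.
Definition W' (x : R) : R := 4 * x * (x ^ 2 - 1).

Lemma W'_is_derivative : forall x, derivable_pt_lim W x (W' x).
Proof.
  intro x. unfold W, W'.
  replace (4 * x * (x ^ 2 - 1)) with
    (INR 2 * (x ^ 2 - 1) ^ (pred 2) * (INR 2 * x ^ (pred 2) + 0)) by (simpl; ring).
  apply (derivable_pt_lim_comp (fun y => y ^ 2 - 1) (fun y => y ^ 2)).
  - replace (INR 2 * x ^ pred 2 + 0) with (INR 2 * x ^ pred 2 - 0) by ring.
    apply (derivable_pt_lim_minus (fun y => y ^ 2) (fun _ => 1)).
    + apply derivable_pt_lim_pow.
    + apply derivable_pt_lim_const.
  - apply derivable_pt_lim_pow.
Qed.

Definition Rsign (x : R) : R :=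
  if Rlt_dec 0 x then 1 else if Rlt_dec x 0 then -1 else 0.

Definition AC_solution (n : nat) (w : nat -> nat -> R) (r eps : R)
    (u0 : nat -> R) (u : R -> nat -> R) : Prop :=
  (forall i, (i < n)%nat -> u 0 i = u0 i) /\
  (forall i, (i < n)%nat -> forall e, 0 < e ->
     exists delta, 0 < delta /\
       forall t, 0 < t < delta -> Rabs (u t i - u0 i) < e) /\
  (forall i, (i < n)%nat -> forall t, 0 < t ->
     derivable_pt_lim (fun s => u s i) t
       (- laplacian n w r (u t) i
        - / eps * Rpower (deg n w i) (- r) * W' (u t i))).

(* Main.v *)
Require Import Defs.
From Stdlib Require Import Reals Lra Lia Psatz Classical.
Open Scope R_scope.

Lemma fsum_le n f g : (forall j, (j<n)%nat -> f j <= g j) -> fsum n f <= fsum n g.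
Proof.
  induction n; simpl; intros H. lra.
  assert (f n <= g n) by (apply H; lia).
  assert (fsum n f <= fsum n g) by (apply IHn; intros; apply H; lia). lra.
Qed.

Lemma fsum_mulr n f c : fsum n (fun j => f j * c) = fsum n f * c.
Proof. induction n; simpl. ring. rewrite IHn. ring. Qed.

Lemma fsum_nonneg n f : (forall j, (j<n)%nat -> 0 <= f j) -> 0 <= fsum n f.
Proof.
  induction n; simpl; intros H. lra.
  assert (0 <= f n) by (apply H; lia).
  assert (0 <= fsum n f) by (apply IHn; intros; apply H; lia). lra.
Qed.

Lemma fsum_ge_term n f i : (forall j, (j<n)%nat -> 0 <= f j) -> (i<n)%nat -> f i <= fsum n f.
Proof.
  induction n; intros H Hi. lia. simpl.
  destruct (Nat.eq_dec i n).
  - subst. assert (0 <= fsum n f) by (apply fsum_nonneg; intros; apply H; lia). lra.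
  - assert (f i <= fsum n f) by (apply IHn; [intros; apply H; lia | lia]).
    assert (0 <= f n) by (apply H; lia). lra.
Qed.

Fixpoint fmin (n:nat) (f:nat->R) : R :=
  match n with O => 1 | S k => Rmin (fmin k f) (f k) end.

Lemma fmin_le1 n f : fmin n f <= 1.
Proof. induction n; simpl. lra. pose proof (Rmin_l (fmin n f) (f n)). lra. Qed.

Lemma fmin_pos n f : (forall j, (j<n)%nat -> 0 < f j) -> 0 < fmin n f.
Proof.
  induction n; simpl; intros H. lra.
  apply Rmin_glb_lt. apply IHn; intros; apply H; lia. apply H; lia.
Qed.

Lemma fmin_le n f i : (i<n)%nat -> fmin n f <= f i.
Proof.
  induction n; intros Hi. lia. simpl. destruct (Nat.eq_dec i n).
  - subst; apply Rmin_r.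
  - eapply Rle_trans. apply Rmin_l. apply IHn; lia.
Qed.

Lemma finite_delta n (P : nat -> R -> Prop) :
  (forall i d d', 0 < d' <= d -> P i d -> P i d') ->
  (forall i, (i<n)%nat -> exists d, 0 < d /\ P i d) ->
  exists d, 0 < d /\ forall i, (i<n)%nat -> P i d.
Proof.
  intros Hm; induction n; intros H.
  - exists 1; split; [lra| intros; lia].
  - destruct IHn as [d1 [Hd1 H1]]. intros; apply H; lia.
    destruct (H n) as [d2 [Hd2 H2]]. lia.
    exists (Rmin d1 d2). split. apply Rmin_glb_lt; auto.
    intros i Hi. destruct (Nat.eq_dec i n).
    + subst. apply Hm with d2; [split; [apply Rmin_glb_lt; auto | apply Rmin_r]| auto].
    + apply Hm with d1; [split;[apply Rmin_glb_lt; auto | apply Rmin_l] | apply H1; lia].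
Qed.

Lemma deriv_left_incr f c l : derivable_pt_lim f c l -> 0 < c ->
  (forall s, 0 <= s < c -> f s < f c) -> 0 <= l.
Proof.
  intros Hd Hc Hs. destruct (Rle_lt_dec 0 l) as [|Hl]; auto. exfalso.
  destruct (Hd (-l) ltac:(lra)) as [[del Hdel] Hdd]. simpl in Hdd.
  assert (Hmp: 0 < Rmin del c) by (apply Rmin_glb_lt; lra).
  pose proof (Rmin_l del c). pose proof (Rmin_r del c).
  set (h := - (Rmin del c / 2)) in *.
  assert (Hh : h <> 0) by (unfold h; lra).
  assert (Hha : Rabs h < del).
  { unfold h. rewrite Rabs_Ropp, Rabs_pos_eq by lra. lra. }
  specialize (Hdd h Hh Hha).
  assert (Hf : f (c + h) < f c) by (apply Hs; unfold h; lra).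
  assert (Hq : 0 < (f (c+h) - f c) / h).
  { replace ((f (c+h) - f c)/h) with ((f c - f (c+h)) / (-h)) by (field; auto).
    apply Rdiv_lt_0_compat; unfold h in *; lra. }
  pose proof (Rle_abs ((f (c + h) - f c) / h - l)). lra.
Qed.

Lemma deriv_left_decr f c l : derivable_pt_lim f c l -> 0 < c ->
  (forall s, 0 <= s < c -> f c < f s) -> l <= 0.
Proof.
  intros Hd Hc Hs.
  pose proof (derivable_pt_lim_opp f c l Hd) as H.
  assert (0 <= - l); [|lra].
  apply (deriv_left_incr _ _ _ H Hc). intros s Hs'. unfold opp_fct.
  specialize (Hs s Hs'). lra.
Qed.

Lemma cont_left_lb f c a : continuity_pt f c -> 0 < c ->
  (forall s, 0 <= s < c -> a < f s) -> a <= f c.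
Proof.
  intros Hc Hc0 Hs. destruct (Rle_lt_dec a (f c)) as [|Hl]; auto. exfalso.
  unfold continuity_pt, continue_in, limit1_in, limit_in, D_x, no_cond in Hc.
  simpl in Hc.
  destruct (Hc (a - f c) ltac:(lra)) as [alp [Halp H]].
  assert (Hmp: 0 < Rmin alp c) by (apply Rmin_glb_lt; lra).
  pose proof (Rmin_l alp c). pose proof (Rmin_r alp c).
  set (s := c - Rmin alp c / 2) in *.
  assert (Hs' : a < f s) by (apply Hs; unfold s; lra).
  assert (Hd : Rdist (f s) (f c) < a - f c).
  { apply H. split. split. exact I. unfold s; lra.
    unfold Rdist, s. rewrite Rabs_left by lra. lra. }
  unfold Rdist in Hd. pose proof (Rle_abs (f s - f c)). lra.
Qed.

Lemma cont_left_ub f c b : continuity_pt f c -> 0 < c ->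
  (forall s, 0 <= s < c -> f s < b) -> f c <= b.
Proof.
  intros Hc Hc0 Hs.
  pose proof (continuity_pt_opp f c Hc) as H.
  assert (-b <= - f c); [|lra].
  apply (cont_left_lb _ _ _ H Hc0). intros s Hs'. unfold opp_fct.
  specialize (Hs s Hs'). lra.
Qed.

Lemma cont_nbhd f c a b : continuity_pt f c -> a < f c < b ->
  exists eta, 0 < eta /\ forall x, Rabs (x - c) < eta -> a < f x < b.
Proof.
  intros Hc Hab.
  unfold continuity_pt, continue_in, limit1_in, limit_in, D_x, no_cond in Hc.
  simpl in Hc.
  destruct (Hc (Rmin (f c - a) (b - f c)) ltac:(apply Rmin_glb_lt; lra)) as [alp [Halp H]].
  exists alp. split. lra. intros x Hx.
  destruct (Req_dec c x). subst; lra.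
  assert (Hd : Rdist (f x) (f c) < Rmin (f c - a) (b - f c)) by (apply H; auto).
  unfold Rdist in Hd. pose proof (Rmin_l (f c - a) (b - f c)).
  pose proof (Rmin_r (f c - a) (b - f c)).
  apply Rabs_def2 in Hd. lra.
Qed.

Lemma barrier_alg p A dg Ds dl K S x :
  0 < p -> 0 < A -> 0 <= dg -> dg <= Ds - 1 -> 1 <= Ds ->
  A * dl >= Ds * (dl + K) -> 0 < dl <= 1/2 -> 2 <= K ->
  dg * (x - K) <= S <= dg * (x + K) ->
  (x = K -> - (p * S) - A * p * W' x < 0) /\
  (x = dl -> 0 < - (p * S) - A * p * W' x) /\
  (x = -K -> 0 < - (p * S) - A * p * W' x) /\
  (x = -dl -> - (p * S) - A * p * W' x < 0).
Proof.
  intros Hp HA Hdg HdgD HDs HAd Hdl HK [HS1 HS2]. unfold W'.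
  assert (HAp : 0 < A * p) by (apply Rmult_lt_0_compat; lra).
  assert (HX : dg * (dl + K) <= (Ds - 1) * (dl + K)) by (apply Rmult_le_compat_r; lra).
  repeat split; intro Hx; subst x.
  - assert (0 <= p * S) by (apply Rmult_le_pos; lra).
    assert (0 < 4 * K * (K^2-1)) by nra.
    assert (0 < A * p * (4 * K * (K^2-1))) by (apply Rmult_lt_0_compat; lra). lra.
  - assert (p * S <= p * ((Ds - 1) * (dl + K))) by (apply Rmult_le_compat_l; lra).
    assert (4 * dl * (dl^2-1) <= -3 * dl) by nra.
    assert (A * p * (4 * dl * (dl^2-1)) <= A * p * (-3 * dl)) by (apply Rmult_le_compat_l; lra).
    assert (p * (A * dl) >= p * (Ds * (dl + K))) by (apply Rmult_ge_compat_l; lra).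
    assert (0 < p * (Ds * (dl+K))) by (apply Rmult_lt_0_compat; nra).
    nra.
  - assert (p * S <= 0) by (assert (S <= 0) by nra; nra).
    assert (4 * -K * ((-K)^2-1) < 0) by nra.
    assert (A * p * (4 * -K * ((-K)^2-1)) < 0) by nra. lra.
  - assert (p * (-((Ds - 1) * (dl + K))) <= p * S) by (apply Rmult_le_compat_l; lra).
    assert (3 * dl <= 4 * -dl * ((-dl)^2-1)) by nra.
    assert (A * p * (3*dl) <= A * p * (4 * -dl * ((-dl)^2-1))) by (apply Rmult_le_compat_l; lra).
    assert (p * (A * dl) >= p * (Ds * (dl + K))) by (apply Rmult_ge_compat_l; lra).
    assert (0 < p * (Ds * (dl+K))) by (apply Rmult_lt_0_compat; nra).
    nra.
Qed.

Definition inreg (a x dl K : R) : Prop :=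
  (0 < a -> dl < x < K) /\ (a < 0 -> -K < x < -dl).

Definition GoodAt (n : nat) (u0 : nat -> R) (u : R -> nat -> R) (dl K t : R) : Prop :=
  forall i, (i < n)%nat -> inreg (u0 i) (u t i) dl K.

Lemma inreg_close a x m K : a <> 0 -> m <= Rabs a -> Rabs a + 2 <= K ->
  0 < m <= 1 -> Rabs (x - a) < m/2 -> inreg a x (m/2) K.
Proof.
  intros Ha Hm HK Hm1 Hx. apply Rabs_def2 in Hx.
  split; intro Hs.
  - rewrite Rabs_pos_eq in * by lra. lra.
  - rewrite Rabs_left in * by lra. lra.
Qed.

Theorem mainTheorem17 (n : nat) (w : nat -> nat -> R) (r : R)
  (u0 : nat -> R) :
  weighted_graph n w ->
  0 <= r <= 1 ->
  (forall i, (i < n)%nat -> u0 i <> 0) ->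
  exists eps0, 0 < eps0 /\
    forall eps, 0 < eps <= eps0 ->
    forall u : R -> nat -> R, AC_solution n w r eps u0 u ->
    forall i, (i < n)%nat -> forall t, 0 <= t ->
      Rsign (u t i) = Rsign (u0 i).
Proof.
  intros [Hsym [Hw0 [Hwii Hdeg]]] Hr Hu0.
  set (f0 := fun i => Rabs (u0 i)).
  set (m := fmin n f0).
  assert (Hm : 0 < m) by (apply fmin_pos; intros; apply Rabs_pos_lt; auto).
  assert (Hm1 : m <= 1) by apply fmin_le1.
  assert (Hmi : forall i, (i<n)%nat -> m <= Rabs (u0 i)) by (intros i Hi; exact (fmin_le n f0 i Hi)).
  set (K := 2 + fsum n f0).
  assert (HK : forall i, (i<n)%nat -> Rabs (u0 i) + 2 <= K).
  { intros i Hi. unfold K. pose proof (fsum_ge_term n f0 i (fun j _ => Rabs_pos (u0 j)) Hi). unfold f0 in *. lra. }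
  assert (HK2 : 2 <= K).
  { unfold K. pose proof (fsum_nonneg n f0 (fun j _ => Rabs_pos (u0 j))). lra. }
  set (Ds := 1 + fsum n (fun i => deg n w i)).
  assert (Hdn : forall j, (j<n)%nat -> 0 <= deg n w j) by (intros j Hj; pose proof (Hdeg j Hj); lra).
  assert (HDs : forall i, (i<n)%nat -> deg n w i <= Ds - 1).
  { intros i Hi. unfold Ds. pose proof (fsum_ge_term n (fun i => deg n w i) i Hdn Hi). simpl in *. lra. }
  assert (HDs1 : 1 <= Ds).
  { unfold Ds. pose proof (fsum_nonneg n (fun i => deg n w i) Hdn). lra. }
  set (dl := m/2).
  assert (Hdl : 0 < dl <= 1/2) by (unfold dl; lra).
  assert (HX : 0 < Ds * (dl + K)) by (apply Rmult_lt_0_compat; lra).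
  exists (dl / (Ds * (dl + K))). split.
  { apply Rdiv_lt_0_compat; lra. }
  intros eps [He He0] u [Hi0 [Hc0 Hd]].
  assert (HA : / eps * dl >= Ds * (dl + K)).
  { assert (H1 : eps * (Ds * (dl + K)) <= dl).
    { apply Rmult_le_compat_r with (r := Ds * (dl + K)) in He0; [| lra].
      unfold Rdiv in He0. rewrite Rmult_assoc, Rinv_l in He0 by lra. lra. }
    assert (H2 : / eps * (eps * (Ds * (dl + K))) <= / eps * dl).
    { apply Rmult_le_compat_l; [left; apply Rinv_0_lt_compat; lra | lra]. }
    replace (/ eps * (eps * (Ds * (dl + K)))) with (Ds * (dl + K)) in H2 by (field; lra).
    lra. }
  assert (Hcont : forall i, (i<n)%nat -> forall t, 0 < t -> continuity_pt (fun s => u s i) t).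
  { intros i Hi t Ht. apply derivable_continuous_pt. exact (exist _ _ (Hd i Hi t Ht)). }
  assert (Hstart : exists d0, 0 < d0 /\ forall t, 0 <= t < d0 -> GoodAt n u0 u dl K t).
  { assert (Hmo : forall i d d', 0 < d' <= d -> (fun i d => forall t, 0 < t < d -> Rabs (u t i - u0 i) < dl) i d ->
       (fun i d => forall t, 0 < t < d -> Rabs (u t i - u0 i) < dl) i d').
    { intros i d d' [? ?] H' t Ht. apply H'; lra. }
    assert (Hex : forall i, (i<n)%nat -> exists d, 0 < d /\ (fun i d => forall t, 0 < t < d -> Rabs (u t i - u0 i) < dl) i d).
    { intros i Hi. destruct (Hc0 i Hi dl ltac:(lra)) as [d [Hdd Hdd']]. exists d; auto. }
    destruct (finite_delta n _ Hmo Hex) as [d0 [Hd0 H]].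
    exists d0. split; auto. intros t [Ht1 Ht2] i Hi. unfold dl.
      apply inreg_close; [auto | apply Hmi; auto | apply HK; auto | lra |].
      destruct Ht1 as [Ht1|Ht1].
      + apply H; auto.
      + subst t. rewrite Hi0 by auto. unfold Rminus. rewrite Rplus_opp_r, Rabs_R0. lra. }
  assert (Hall : forall T, 0 <= T -> GoodAt n u0 u dl K T).
  { intros T HT. destruct (classic (GoodAt n u0 u dl K T)) as [|HnG]; auto. exfalso.
    destruct Hstart as [d0 [Hd0 Hs0]].
    assert (HTd : d0/2 <= T).
    { destruct (Rle_lt_dec (d0/2) T); auto. exfalso; apply HnG; apply Hs0; lra. }
    set (E := fun t => 0 <= t <= T /\ forall s, 0 <= s <= t -> GoodAt n u0 u dl K s).
    assert (Hb : bound E). { exists T. intros x [Hx _]. lra. }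
    assert (Hne : exists x, E x). { exists 0. split. lra. intros s Hs; apply Hs0; lra. }
    destruct (completeness E Hb Hne) as [c [Hub Hlub]].
    { assert (Hcd : d0/2 <= c).
      { apply Hub. split. lra. intros s Hs; apply Hs0; lra. }
      assert (HcT : c <= T). { apply Hlub. intros x [Hx _]. lra. }
      assert (HA' : forall s, 0 <= s < c -> GoodAt n u0 u dl K s).
      { intros s Hs. destruct (classic (exists t, E t /\ s < t)) as [[t [[_ Ht] Hst]]|Hne2].
        - apply Ht; lra.
        - exfalso. assert (c <= s); [|lra]. apply Hlub. intros x Ex.
          destruct (Rle_lt_dec x s); auto. exfalso; apply Hne2; exists x; auto. }
      assert (Hc0' : 0 < c) by lra.
      assert (Hcl : forall j, (j<n)%nat -> (0 < u0 j -> dl <= u c j <= K) /\ (u0 j < 0 -> -K <= u c j <= -dl)).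
      { intros j Hj. split; intro Hs; split.
        - apply (cont_left_lb (fun s => u s j) c dl (Hcont j Hj c Hc0') Hc0').
          intros s Hs'. exact (proj1 (proj1 (HA' s Hs' j Hj) Hs)).
        - apply (cont_left_ub (fun s => u s j) c K (Hcont j Hj c Hc0') Hc0').
          intros s Hs'. exact (proj2 (proj1 (HA' s Hs' j Hj) Hs)).
        - apply (cont_left_lb (fun s => u s j) c (-K) (Hcont j Hj c Hc0') Hc0').
          intros s Hs'. exact (proj1 (proj2 (HA' s Hs' j Hj) Hs)).
        - apply (cont_left_ub (fun s => u s j) c (-dl) (Hcont j Hj c Hc0') Hc0').
          intros s Hs'. exact (proj2 (proj2 (HA' s Hs' j Hj) Hs)). }
      assert (Habs : forall j, (j<n)%nat -> -K <= u c j <= K).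
      { intros j Hj. destruct (Hcl j Hj) as [P N].
        destruct (Rtotal_order (u0 j) 0) as [H|[H|H]].
        - specialize (N H); lra.
        - exfalso; apply (Hu0 j Hj H).
        - specialize (P H); lra. }
      assert (HGc : GoodAt n u0 u dl K c).
      { intros i Hi.
        set (p := Rpower (deg n w i) (-r)).
        assert (Hp : 0 < p) by (unfold p, Rpower; apply exp_pos).
        set (S := fsum n (fun j => w i j * (u c i - u c j))).
        assert (HS : deg n w i * (u c i - K) <= S <= deg n w i * (u c i + K)).
        { unfold S, deg. rewrite <- !fsum_mulr. split; apply fsum_le; intros j Hj;
            apply Rmult_le_compat_l; try (apply Hw0; auto); pose proof (Habs j Hj); lra. }
        pose proof (barrier_alg p (/eps) (deg n w i) Ds dl K S (u c i) Hp
                      (Rinv_0_lt_compat _ He) (Hdn i Hi) (HDs i Hi) HDs1 HA Hdl HK2 HS)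
          as [B1 [B2 [B3 B4]]].
        pose proof (Hd i Hi c Hc0') as HD.
        replace (- laplacian n w r (u c) i - / eps * Rpower (deg n w i) (- r) * W' (u c i))
          with (- (p * S) - / eps * p * W' (u c i)) in HD by reflexivity.
        destruct (Hcl i Hi) as [Cp Cn]. split; intro Hs.
        - destruct (Cp Hs) as [C1 C2]. split.
          + destruct C1 as [C1|C1]; auto. exfalso.
            assert (Hl : - (p * S) - / eps * p * W' (u c i) <= 0).
            { apply (deriv_left_decr _ _ _ HD Hc0'). intros s Hs'. simpl.
              pose proof (proj1 (proj1 (HA' s Hs' i Hi) Hs)). lra. }
            specialize (B2 (eq_sym C1)). lra.
          + destruct C2 as [C2|C2]; auto. exfalso.
            assert (Hl : 0 <= - (p * S) - / eps * p * W' (u c i)).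
            { apply (deriv_left_incr _ _ _ HD Hc0'). intros s Hs'. simpl.
              pose proof (proj2 (proj1 (HA' s Hs' i Hi) Hs)). lra. }
            specialize (B1 C2). lra.
        - destruct (Cn Hs) as [C1 C2]. split.
          + destruct C1 as [C1|C1]; auto. exfalso.
            assert (Hl : - (p * S) - / eps * p * W' (u c i) <= 0).
            { apply (deriv_left_decr _ _ _ HD Hc0'). intros s Hs'. simpl.
              pose proof (proj1 (proj2 (HA' s Hs' i Hi) Hs)). lra. }
            specialize (B3 (eq_sym C1)). lra.
          + destruct C2 as [C2|C2]; auto. exfalso.
            assert (Hl : 0 <= - (p * S) - / eps * p * W' (u c i)).
            { apply (deriv_left_incr _ _ _ HD Hc0'). intros s Hs'. simpl.
              pose proof (proj2 (proj2 (HA' s Hs' i Hi) Hs)). lra. }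
            specialize (B4 C2). lra. }
      assert (Hmo : forall i d d', 0 < d' <= d ->
        (fun i eta => forall x, Rabs (x - c) < eta -> inreg (u0 i) (u x i) dl K) i d ->
        (fun i eta => forall x, Rabs (x - c) < eta -> inreg (u0 i) (u x i) dl K) i d').
      { intros i d d' [? ?] Hq x Hx. apply Hq; lra. }
      assert (Hex : forall i, (i<n)%nat -> exists d, 0 < d /\ (fun i eta => forall x, Rabs (x - c) < eta -> inreg (u0 i) (u x i) dl K) i d).
      { intros i Hi. destruct (HGc i Hi) as [P N].
        destruct (Rtotal_order (u0 i) 0) as [H|[H|H]].
        * destruct (cont_nbhd _ c (-K) (-dl) (Hcont i Hi c Hc0') (N H)) as [et [Het Hx]].
          exists et; split; auto. intros x Hx'. split; intro; [lra | apply (Hx x Hx')].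
        * exfalso; apply (Hu0 i Hi H).
        * destruct (cont_nbhd _ c dl K (Hcont i Hi c Hc0') (P H)) as [et [Het Hx]].
          exists et; split; auto. intros x Hx'. split; intro; [apply (Hx x Hx') | lra]. }
      destruct (finite_delta n _ Hmo Hex) as [eta [Heta Hn]].
      { destruct (Rlt_le_dec c T) as [HcT'|HcT'].
        * assert (Ht' : c < Rmin (c + eta/2) T) by (apply Rmin_glb_lt; lra).
          pose proof (Rmin_l (c + eta/2) T). pose proof (Rmin_r (c + eta/2) T).
          set (t' := Rmin (c + eta/2) T) in *.
          assert (E t').
          { split. lra. intros s Hs.
            destruct (Rtotal_order s c) as [Hq|[Hq|Hq]].
            - apply HA'; lra.
            - subst s; auto.
            - intros i Hi. apply Hn; auto. rewrite Rabs_pos_eq; lra. }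
          match goal with Hx : E t' |- _ => pose proof (Hub t' Hx) end. lra.
        * apply HnG. replace T with c by lra. auto. } } }
  intros i Hi t Ht. destruct (Hall t Ht i Hi) as [P N].
  unfold Rsign.
  destruct (Rtotal_order (u0 i) 0) as [H|[H|H]].
  - specialize (N H).
    destruct (Rlt_dec 0 (u t i)); [lra|]. destruct (Rlt_dec (u t i) 0); [|lra].
    destruct (Rlt_dec 0 (u0 i)); [lra|]. destruct (Rlt_dec (u0 i) 0); [|lra]. reflexivity.
  - exfalso; apply (Hu0 i Hi H).
  - specialize (P H).
    destruct (Rlt_dec 0 (u t i)); [|lra]. destruct (Rlt_dec 0 (u0 i)); [|lra]. reflexivity.
Qed.
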